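(* Let $n\ge2$ be an integer and $\lambda>0$, and let $\gamma(t)=(\omega(t),x(t),y(t))$ be a solution with $\omega>0$ of the system $$\frac{d\omega}{dt}=x\omega,\qquad \frac{dx}{dt}=x^2-xy+n-1-\lambda\omega^2,\qquad \frac{dy}{dt}=xy-nx^2-\lambda\omega^2,$$ defined on the maximal interval $(S,\infty)$, such that $\int_{t_0}^\infty\omega(\sigma)\,d\sigma=\infty$ for every $t_0\in(S,\infty)$ and $-1<x(t)<1$ for all $t\in(S,\infty)$. Then $\lim_{t\to\infty}y(t)=-\infty$. *)

(* Defs.v *)
From Stdlib Require Import Reals.
From Coquelicot Require Import Coquelicot.
Open Scope R_scope.

Definition is_sol (n : nat) (lam : R) (S : Rbar) (w x y : R -> R) : Prop :=
  forall t : R, Rbar_lt S t ->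
    is_derive w t (x t * w t) /\
    is_derive x t (x t ^ 2 - x t * y t + INR n - 1 - lam * w t ^ 2) /\
    is_derive y t (x t * y t - INR n * x t ^ 2 - lam * w t ^ 2).

Definition maximal_sol (n : nat) (lam : R) (S : Rbar) (w x y : R -> R) : Prop :=
  is_sol n lam S w x y /\
  forall (S' : Rbar) (w' x' y' : R -> R),
    Rbar_lt S' S -> is_sol n lam S' w' x' y' ->
    (forall t : R, Rbar_lt S t -> w' t = w t /\ x' t = x t /\ y' t = y t) ->
    False.

Definition integral_diverges (w : R -> R) (t0 : R) : Prop :=
  forall M : R, exists T : R, t0 <= T /\ M < RInt w t0 T.

(* Main.v *)
Require Import Defs.
From Stdlib Require Import Reals Lra Psatz Classical.
From Coquelicot Require Import Coquelicot.
Open Scope R_scope.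

Lemma der_cont (f : R -> R) t l : is_derive f t l -> continuity_pt f t.
Proof.
  intro H. apply continuity_pt_filterlim.
  apply (ex_derive_continuous f t). exists l; exact H.
Qed.

Lemma mono_nonincr (f df : R -> R) a b :
  a <= b -> (forall t, a <= t <= b -> is_derive f t (df t)) ->
  (forall t, a <= t <= b -> df t <= 0) -> f b <= f a.
Proof.
  intros Hab Hd Hs.
  destruct (MVT_gen f a b df) as [c [Hc Heq]].
  - intros t Ht. rewrite Rmin_left in Ht by lra. rewrite Rmax_right in Ht by lra.
    apply Hd; lra.
  - intros t Ht. rewrite Rmin_left in Ht by lra. rewrite Rmax_right in Ht by lra.
    apply (der_cont f t (df t)). apply Hd; lra.
  - rewrite Rmin_left in Hc by lra. rewrite Rmax_right in Hc by lra.
    assert (df c <= 0) by (apply Hs; lra).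
    assert (df c * (b - a) <= 0) by (apply Rmult_le_0_r; lra). lra.
Qed.

Lemma int_le (f g dg : R -> R) a b :
  a <= b -> (forall t, a <= t <= b -> is_derive g t (dg t)) ->
  (forall t, a <= t <= b -> continuous dg t) ->
  (forall t, a <= t <= b -> continuous f t) ->
  (forall t, a <= t <= b -> f t <= dg t) -> RInt f a b <= g b - g a.
Proof.
  intros Hab Hd Hdc Hfc Hle.
  assert (E : RInt dg a b = g b - g a).
  { apply is_RInt_unique.
    apply (is_RInt_derive g dg a b).
    - intros t Ht. rewrite Rmin_left in Ht by lra. rewrite Rmax_right in Ht by lra. apply Hd; lra.
    - intros t Ht. rewrite Rmin_left in Ht by lra. rewrite Rmax_right in Ht by lra. apply Hdc; lra. }
  rewrite <- E. apply RInt_le; auto.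
  - apply (@ex_RInt_continuous R_CompleteNormedModule). intros t Ht.
    rewrite Rmin_left in Ht by lra. rewrite Rmax_right in Ht by lra. apply Hfc; lra.
  - apply (@ex_RInt_continuous R_CompleteNormedModule). intros t Ht.
    rewrite Rmin_left in Ht by lra. rewrite Rmax_right in Ht by lra. apply Hdc; lra.
  - intros t Ht; apply Hle; lra.
Qed.

Lemma barrier (f df : R -> R) (a b c : R) :
  (forall t, a <= t <= b -> is_derive f t (df t)) ->
  (forall t, a <= t <= b -> c <= f t -> 0 < df t) ->
  c <= f a -> forall t, a <= t <= b -> c <= f t.
Proof.
  intros Hd Hp Ha t1 Ht1.
  destruct (Rle_lt_dec c (f t1)) as [h|h]; [exact h|exfalso].
  set (E := fun r => a <= r <= t1 /\ c <= f r).
  assert (Hb : bound E) by (exists t1; intros r [[_ ?] _]; lra).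
  assert (Hne : exists r, E r) by (exists a; split; [lra|exact Ha]).
  destruct (completeness E Hb Hne) as [m [Hub Hlub]].
  assert (Ham : a <= m) by (apply Hub; split; [lra|exact Ha]).
  assert (Hmt : m <= t1) by (apply Hlub; intros r [[_ ?] _]; lra).
  assert (Hfm : c <= f m).
  { destruct (Rle_lt_dec c (f m)) as [q|q]; [exact q|exfalso].
    assert (Hc := der_cont f m (df m) (Hd m ltac:(lra))).
    destruct (Hc (c - f m) ltac:(lra)) as [del [Hdel Hdd]].
    assert (m <= m - del).
    { apply Hlub. intros r [Hr Hfr].
      destruct (Rle_lt_dec r (m - del)) as [q'|q']; [exact q'|exfalso].
      assert (r <= m) by (apply Hub; split; assumption).
      assert (r <> m) by (intro; subst; lra).
      specialize (Hdd r). simpl in Hdd. unfold R_dist in Hdd.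
      assert (Hx : Rabs (f r - f m) < c - f m).
      { apply Hdd. split. split. exact I. auto.
        rewrite Rabs_left; lra. }
      apply Rabs_def2 in Hx. lra. }
    lra. }
  assert (Hmt' : m < t1) by (destruct (Req_dec m t1); [subst; lra | lra]).
  assert (Hpos : 0 < df m) by (apply Hp; [lra|exact Hfm]).
  assert (Hl := proj1 (is_derive_Reals f m (df m)) (Hd m ltac:(lra))).
  destruct (Hl (df m / 2) ltac:(lra)) as [del Hdel].
  set (h0 := Rmin (del / 2) (t1 - m)).
  assert (Hh0 : 0 < h0) by (unfold h0; apply Rmin_pos; [destruct del; simpl; lra | lra]).
  assert (Hh1 : h0 <= del / 2) by apply Rmin_l.
  assert (Hh2 : h0 <= t1 - m) by apply Rmin_r.
  assert (Hq := Hdel h0 ltac:(lra) ltac:(rewrite Rabs_right; destruct del; simpl in *; lra)).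
  apply Rabs_def2 in Hq.
  set (q := (f (m + h0) - f m) / h0) in Hq.
  assert (Hfq : f (m + h0) - f m = q * h0) by (unfold q; field; lra).
  assert (0 < q * h0) by (apply Rmult_lt_0_compat; lra).
  assert (m + h0 <= m) by (apply Hub; split; [lra|lra]).
  lra.
Qed.

Lemma mono_nondecr (f df : R -> R) a b :
  a <= b -> (forall t, a <= t <= b -> is_derive f t (df t)) ->
  (forall t, a <= t <= b -> 0 <= df t) -> f a <= f b.
Proof.
  intros Hab Hd Hs.
  destruct (MVT_gen f a b df) as [c [Hc Heq]].
  - intros t Ht. rewrite Rmin_left in Ht by lra. rewrite Rmax_right in Ht by lra.
    apply Hd; lra.
  - intros t Ht. rewrite Rmin_left in Ht by lra. rewrite Rmax_right in Ht by lra.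
    apply (der_cont f t (df t)). apply Hd; lra.
  - rewrite Rmin_left in Hc by lra. rewrite Rmax_right in Hc by lra.
    assert (0 <= df c) by (apply Hs; lra).
    assert (0 <= df c * (b - a)) by (apply Rmult_le_pos; lra). lra.
Qed.

Lemma exp_le a b : a <= b -> exp a <= exp b.
Proof.
  intro H. destruct (Rle_lt_or_eq_dec a b H) as [h|h].
  - left. apply exp_increasing. exact h.
  - subst. lra.
Qed.

Lemma der_eta (f : R -> R) t l : is_derive f t l -> Derive (fun u => f u) t = l.
Proof. intro H. apply is_derive_unique. exact H. Qed.

Lemma cont_ex (f : R -> R) t : ex_derive f t -> continuous f t.
Proof. intro H. exact (@ex_derive_continuous R_AbsRing R_NormedModule f t H). Qed.


Theorem lemma3p8 (n : nat) (lam : R) (S : Rbar) (w x y : R -> R) :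
  (2 <= n)%nat -> 0 < lam ->
  maximal_sol n lam S w x y ->
  (forall t : R, Rbar_lt S t -> 0 < w t) ->
  (forall t0 : R, Rbar_lt S t0 -> integral_diverges w t0) ->
  (forall t : R, Rbar_lt S t -> -1 < x t < 1) ->
  is_lim y p_infty m_infty.
Proof.
  intros Hn Hlam [Hsol Hmax] Hw Hint Hx.
  assert (HN : 2 <= INR n) by (replace 2 with (INR 2) by (simpl; ring); apply le_INR; exact Hn).
  set (N := INR n) in *.
  assert (Hex : exists t0 : R, Rbar_lt S t0).
  { destruct S as [s| |].
    - exists (s + 1). simpl. lra.
    - exfalso. apply (Hmax m_infty (fun _ => sqrt ((N - 1) / lam)) (fun _ => 0) (fun t => - (N - 1) * t)).
      + exact I.
      + intros t _. assert (Hs : sqrt ((N - 1) / lam) ^ 2 = (N - 1) / lam).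
        { rewrite <- Rsqr_pow2. apply Rsqr_sqrt. apply Rdiv_le_0_compat; lra. }
        split; [|split].
        * auto_derive; [exact I|]. ring.
        * auto_derive; [exact I|]. change (INR n) with N. rewrite Hs. field. lra.
        * auto_derive; [exact I|]. rewrite Hs. field. lra.
      + intros t Ht. simpl in Ht. contradiction.
    - exists 0. simpl. exact I. }
  destruct Hex as [t0 Ht0].
  assert (LS : forall a t : R, Rbar_lt S a -> a <= t -> Rbar_lt S t).
  { intros a t Ha Hat. apply Rbar_lt_le_trans with a; [exact Ha|simpl; exact Hat]. }
  assert (Dw : forall t : R, Rbar_lt S t -> is_derive w t (x t * w t)) by (intros t Ht; apply (Hsol t Ht)).
  assert (Dx : forall t : R, Rbar_lt S t -> is_derive x t (x t ^ 2 - x t * y t + N - 1 - lam * w t ^ 2))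
    by (intros t Ht; apply (Hsol t Ht)).
  assert (Dy : forall t : R, Rbar_lt S t -> is_derive y t (x t * y t - N * x t ^ 2 - lam * w t ^ 2))
    by (intros t Ht; apply (Hsol t Ht)).
  clear Hsol Hmax.
  Ltac side Dw Dx Dy := repeat match goal with
    | |- _ /\ _ => split
    | |- True => exact I
    | |- ex_derive (fun u => ?f u) ?t =>
        first [ lazymatch type of Dw with forall s : R, _ -> is_derive ?W _ _ => constr_eq f W end;
                eexists; apply (Dw t); assumption
              | lazymatch type of Dx with forall s : R, _ -> is_derive ?W _ _ => constr_eq f W end;
                eexists; apply (Dx t); assumption
              | lazymatch type of Dy with forall s : R, _ -> is_derive ?W _ _ => constr_eq f W end;
                eexists; apply (Dy t); assumption ]
    | |- _ <> 0 => apply Rgt_not_eq; repeat apply Rmult_lt_0_compat; lra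
    end.
  set (z := fun t => y t / w t).
  assert (Dz : forall t : R, Rbar_lt S t -> is_derive z t (-(N * x t ^ 2 / w t + lam * w t))).
  { intros t Ht. assert (Hwt := Hw t Ht). unfold z. auto_derive; [side Dw Dx Dy|].
    rewrite ?(der_eta _ _ _ (Dw t Ht)), ?(der_eta _ _ _ (Dx t Ht)), ?(der_eta _ _ _ (Dy t Ht)). change (INR n) with N. rewrite ?(der_eta _ _ _ (Dw t Ht)), ?(der_eta _ _ _ (Dx t Ht)), ?(der_eta _ _ _ (Dy t Ht)). field. lra. }
  assert (Zmono : forall a b : R, Rbar_lt S a -> a <= b -> z b <= z a).
  { intros a b Ha Hab. apply (mono_nonincr z (fun t => -(N * x t ^ 2 / w t + lam * w t)) a b Hab).
    - intros t Ht. apply Dz. apply (LS a); [assumption|lra].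
    - intros t Ht. assert (Hwt := Hw t (LS a t Ha (proj1 Ht))).
      assert (0 <= N * x t^2 / w t) by (apply Rdiv_le_0_compat; nra). nra. }
  assert (Zint : forall a b : R, Rbar_lt S a -> a <= b -> lam * RInt w a b <= z a - z b).
  { intros a b Ha Hab.
    assert (H : RInt w a b <= (fun t => - z t / lam) b - (fun t => - z t / lam) a).
    { apply (int_le w (fun t => - z t / lam) (fun t => (N * x t ^ 2 / w t + lam * w t) / lam) a b Hab).
      - intros t Ht. assert (Ht' := LS a t Ha (proj1 Ht)). assert (Hwt := Hw t Ht').
        unfold z. auto_derive; [side Dw Dx Dy|].
        rewrite ?(der_eta _ _ _ (Dw t Ht')), ?(der_eta _ _ _ (Dx t Ht')), ?(der_eta _ _ _ (Dy t Ht')). change (INR n) with N. field. lra.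
      - intros t Ht. assert (Ht' := LS a t Ha (proj1 Ht)). assert (Hwt := Hw t Ht').
        apply cont_ex. auto_derive. side Dw Dx Dy.
      - intros t Ht. assert (Ht' := LS a t Ha (proj1 Ht)).
        apply cont_ex. eexists; apply Dw; exact Ht'.
      - intros t Ht. assert (Ht' := LS a t Ha (proj1 Ht)). assert (Hwt := Hw t Ht').
        assert (0 <= N * x t ^ 2 / w t / lam) by (repeat apply Rdiv_le_0_compat; nra).
        replace ((N * x t ^ 2 / w t + lam * w t) / lam) with (N * x t ^ 2 / w t / lam + w t)
          by (field; lra). lra. }
    simpl in H. apply (Rmult_le_compat_l lam) in H; [|lra].
    replace (lam * (- z b / lam - - z a / lam)) with (z a - z b) in H by (field; lra). exact H. }
  assert (Zlim : forall K, exists TK : R, Rbar_lt S TK /\ forall t, TK <= t -> z t <= - K).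
  { intro K. destruct (Hint t0 Ht0 ((z t0 + K) / lam)) as [T [HT1 HT2]].
    exists T. split. apply (LS t0); [assumption|lra].
    intros t Ht. assert (z t <= z T) by (apply Zmono; [apply (LS t0); [assumption|lra]| lra]).
    assert (H1 : lam * RInt w t0 T <= z t0 - z T) by (apply Zint; [exact Ht0 | lra]).
    assert (H2 : lam * ((z t0 + K)/lam) < lam * RInt w t0 T) by (apply Rmult_lt_compat_l; lra).
    replace (lam * ((z t0 + K)/lam)) with (z t0 + K) in H2 by (field; lra). lra. }
  set (D := fun t => (y t - x t - (N - 1)) / w t ^ 2).
  assert (Dmono : forall a b : R, Rbar_lt S a -> a <= b -> D b <= D a).
  { intros a b Ha Hab. apply (mono_nonincr D (fun t => - ((N - 1) * (1 - x t) ^ 2 / w t ^ 2)) a b Hab).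
    - intros t Ht. assert (Ht' := LS a t Ha (proj1 Ht)). assert (Hwt := Hw t Ht').
      unfold D. auto_derive; [side Dw Dx Dy|].
      rewrite ?(der_eta _ _ _ (Dw t Ht')), ?(der_eta _ _ _ (Dx t Ht')), ?(der_eta _ _ _ (Dy t Ht')). change (INR n) with N. field. lra.
    - intros t Ht. assert (Hwt := Hw t (LS a t Ha (proj1 Ht))).
      assert (0 <= (N-1)*(1-x t)^2 / w t^2) by (apply Rdiv_le_0_compat; [apply Rmult_le_pos; [lra|apply pow2_ge_0] | apply pow_lt; lra]). lra. }
  apply is_lim_spec. intro M'. simpl.
  apply NNPP. intro Hneg.
  assert (Hfr : forall T : R, exists t : R, T < t /\ M' <= y t).
  { intro T. apply NNPP. intro H. apply Hneg. exists T. intros t Ht.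
    apply Rnot_le_lt. intro H'. apply H. exists t. split; assumption. }
  clear Hneg.
  set (M := Rmax 1 (- M')).
  assert (HM1 : 1 <= M) by apply Rmax_l. assert (HM2 : - M' <= M) by apply Rmax_r.
  set (k := 4 / (N - 1)).
  assert (Hk : 0 < k) by (unfold k; apply Rdiv_lt_0_compat; lra).
  assert (Hkdef : k * (N - 1) = 4) by (unfold k; field; lra).
  clearbody k.
  set (g := 2 * lam * k). assert (Hg : 0 < g) by (unfold g; nra).
  set (c := exp 2). assert (Hc : 0 < c) by apply exp_pos.
  set (e0 := exp (- k * (1 + M)) / (g * c)).
  assert (He0 : 0 < e0) by (unfold e0; apply Rdiv_lt_0_compat; [apply exp_pos| apply Rmult_lt_0_compat; lra]).
  assert (He0' : exp (- k * (1 + M)) = e0 * (g * c)) by (unfold e0; field; lra).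
  clearbody e0.
  set (K := M * (1 + / e0) + 2 * lam + 1).
  assert (Hie : 0 < / e0) by (apply Rinv_0_lt_compat; exact He0).
  assert (HK1 : M * (1 + / e0) <= K) by (unfold K; lra).
  assert (HK2 : 2 * lam + 1 <= K) by (unfold K; nra).
  clearbody K.
  destruct (Zlim K) as [TK [HTK HzK]].
  destruct (Hfr TK) as [T [HT HyT]].
  assert (HST : Rbar_lt S T) by (apply (LS TK); [assumption|lra]).
  assert (HtS : forall t : R, T <= t -> Rbar_lt S t) by (intros t Ht; apply (LS T); assumption).
  assert (HzT : z T <= - K) by (apply HzK; lra).
  assert (HwT := Hw T HST). assert (HxT := Hx T HST).
  assert (HyzT : y T = z T * w T) by (unfold z; field; lra).
  assert (HyT0 : y T < 0) by (rewrite HyzT; nra).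
  assert (HyTM : - M <= y T) by lra.
  assert (HwK : w T * K <= M) by nra.
  assert (HwE1 : M * (w T * (1 + / e0)) <= M).
  { apply Rle_trans with (w T * K); [|exact HwK]. nra. }
  assert (HwE2 : w T * (1 + / e0) <= 1).
  { apply Rmult_le_reg_l with M; lra. }
  assert (HwE3 : w T * / e0 <= 1) by nra.
  assert (HwE4 : w T <= e0).
  { replace (w T) with ((w T * / e0) * e0) by (field; lra). nra. }
  assert (HwE5 : w T < 1) by nra.
  assert (HwT2 : w T ^ 2 <= e0) by nra.
  assert (HDT : y T - x T - (N - 1) <= - 2 * lam * w T ^ 2).
  { assert (y T <= - K * w T) by (rewrite HyzT; nra). nra. }
  assert (HDTv : D T <= - 2 * lam).
  { assert (E : D T * w T ^ 2 = y T - x T - (N - 1)) by (unfold D; field; lra). nra. }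
  assert (HD : forall t : R, T <= t -> y t - x t - (N - 1) <= - 2 * lam * w t ^ 2).
  { intros t Ht. assert (Dm : D t <= D T) by (apply Dmono; [exact HST|exact Ht]).
    assert (Hwt := Hw t (HtS t Ht)).
    assert (E : D t * w t ^ 2 = y t - x t - (N - 1)) by (unfold D; field; lra). nra. }
  assert (Hyneg : forall t : R, T <= t -> y t < 0).
  { intros t Ht. assert (z t <= - K) by (apply HzK; lra).
    assert (Hwt := Hw t (HtS t Ht)).
    assert (E : y t = z t * w t) by (unfold z; field; lra). rewrite E; nra. }
  set (dx := fun t => x t ^ 2 - x t * y t + N - 1 - lam * w t ^ 2).
  assert (Hdxp : forall t : R, T <= t -> 1/2 <= x t -> 1/2 <= dx t).
  { intros t Ht Hxt. unfold dx.
    assert (H1 := HD t Ht). assert (H2 := Hyneg t Ht).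
    assert (H3 : 0 <= (x t - 1/2) * (- y t)) by (apply Rmult_le_pos; lra).
    assert (H4 : 0 <= x t * (x t - 1/2)) by (apply Rmult_le_pos; lra).
    nra. }
  assert (Hxh : forall t : R, T <= t -> x t < 1/2).
  { intros s Hs. apply Rnot_le_lt. intro Hs2.
    assert (Hall : forall t, s <= t <= s + 1 -> 1/2 <= x t).
    { apply (barrier x dx s (s + 1) (1/2)).
      - intros t Ht. apply Dx. apply HtS. lra.
      - intros t Ht Hxt. assert (1/2 <= dx t) by (apply Hdxp; lra). lra.
      - exact Hs2. }
    destruct (MVT_gen x s (s + 1) dx) as [xi [Hxi Heq]].
    - intros t Ht. rewrite Rmin_left in Ht by lra. rewrite Rmax_right in Ht by lra.
      apply Dx. apply HtS. lra.
    - intros t Ht. rewrite Rmin_left in Ht by lra. rewrite Rmax_right in Ht by lra.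
      apply (der_cont x t (dx t)). apply Dx. apply HtS. lra.
    - rewrite Rmin_left in Hxi by lra. rewrite Rmax_right in Hxi by lra.
      assert (1/2 <= dx xi) by (apply Hdxp; [lra| apply Hall; lra]).
      assert (Hx1 := Hx (s + 1) (HtS (s+1) ltac:(lra))).
      replace (s + 1 - s) with 1 in Heq by ring. lra. }
  set (L := fun t => exp (k * (x t + y t) - 2 * t) / w t ^ 2 - g * c / 2 * exp (-2 * t)).
  set (dL := fun t => exp (k * (x t + y t) - 2 * t) / w t ^ 2 *
     (k * ((x t ^ 2 - x t * y t + N - 1 - lam * w t ^ 2) + (x t * y t - N * x t ^ 2 - lam * w t ^ 2)) - 2 - 2 * x t)
     + g * c * exp (-2 * t)).
  assert (DL : forall t : R, Rbar_lt S t -> is_derive L t (dL t)).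
  { intros t Ht. assert (Hwt := Hw t Ht). unfold L, dL. auto_derive; [side Dw Dx Dy|].
    rewrite ?(der_eta _ _ _ (Dw t Ht)), ?(der_eta _ _ _ (Dx t Ht)), ?(der_eta _ _ _ (Dy t Ht)).
    change (INR n) with N. replace (k * (x t + y t) + - (2 * t)) with (k * (x t + y t) - 2 * t) by ring. field. lra. }
  assert (HdL : forall t : R, T <= t -> 0 <= dL t).
  { intros t Ht. assert (Hwt := Hw t (HtS t Ht)). assert (Hxt := Hx t (HtS t Ht)).
    assert (Hx2 := Hxh t Ht). assert (Hy2 := Hyneg t Ht).
    assert (Hkk : k * ((x t ^ 2 - x t * y t + N - 1 - lam * w t ^ 2) + (x t * y t - N * x t ^ 2 - lam * w t ^ 2))
                  = 4 - 4 * x t ^ 2 - g * w t ^ 2).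
    { replace (k * ((x t ^ 2 - x t * y t + N - 1 - lam * w t ^ 2) + (x t * y t - N * x t ^ 2 - lam * w t ^ 2)))
        with (k * (N - 1) * (1 - x t ^ 2) - 2 * lam * k * w t ^ 2) by ring.
      rewrite Hkdef. unfold g. ring. }
    unfold dL. rewrite Hkk.
    set (E := exp (k * (x t + y t) - 2 * t)).
    assert (HE : 0 < E) by apply exp_pos.
    assert (HEc : E <= c * exp (-2 * t)).
    { unfold E, c. rewrite <- exp_plus. apply exp_le.
      assert (k <= 4) by nra. assert (k * (x t + y t) <= 2) by nra. lra. }
    replace (E / w t ^ 2 * (4 - 4 * x t ^ 2 - g * w t ^ 2 - 2 - 2 * x t) + g * c * exp (-2 * t))
      with (E / w t ^ 2 * (2 * (1 - 2 * x t) * (1 + x t)) + g * (c * exp (-2 * t) - E)) by (field; lra).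
    assert (0 <= E / w t ^ 2) by (apply Rdiv_le_0_compat; nra).
    assert (0 <= 2 * (1 - 2 * x t) * (1 + x t)) by nra.
    assert (0 <= g * (c * exp (-2 * t) - E)) by nra.
    nra. }
  assert (Lmono : forall t : R, T <= t -> L T <= L t).
  { intros t Ht. apply (mono_nondecr L dL T t Ht).
    - intros r Hr. apply DL. apply HtS. lra.
    - intros r Hr. apply HdL. lra. }
  set (VT := exp (k * (x T + y T) - 2 * T) / w T ^ 2).
  assert (HVT : g * c * exp (-2 * T) <= VT).
  { unfold VT. replace (k * (x T + y T) - 2 * T) with (k * (x T + y T) + (-2 * T)) by ring.
    rewrite exp_plus.
    assert (H1 : exp (- k * (1 + M)) <= exp (k * (x T + y T))) by (apply exp_le; nra).
    rewrite He0' in H1.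
    assert (Hgc : 0 < g * c) by nra.
    assert (H2 : g * c * w T ^ 2 <= exp (k * (x T + y T))).
    { apply Rle_trans with (e0 * (g * c)); [|exact H1].
      rewrite (Rmult_comm e0). apply Rmult_le_compat_l; lra. }
    assert (H3 := exp_pos (-2 * T)).
    apply Rmult_le_reg_r with (w T ^ 2); [nra|].
    replace (exp (k * (x T + y T)) * exp (-2 * T) / w T ^ 2 * w T ^ 2)
      with (exp (k * (x T + y T)) * exp (-2 * T)) by (field; lra). nra. }
  assert (HVT0 : 0 < VT) by (unfold VT; apply Rdiv_lt_0_compat; [apply exp_pos|nra]).
  set (B := sqrt (2 * c / VT)).
  assert (HB2 : B * B = 2 * c / VT) by (unfold B; apply sqrt_sqrt; apply Rdiv_le_0_compat; lra).
  assert (HB0 : 0 <= B) by (unfold B; apply sqrt_pos).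
  assert (Hwb : forall t : R, T <= t -> w t <= B * exp (- t)).
  { intros t Ht. assert (Hwt := Hw t (HtS t Ht)). assert (Hx2 := Hxh t Ht). assert (Hy2 := Hyneg t Ht).
    assert (HL := Lmono t Ht). unfold L in HL. cbv beta in HL. fold VT in HL.
    set (E := exp (k * (x t + y t) - 2 * t)) in HL.
    assert (HEc : E <= c * (exp (- t) * exp (- t))).
    { unfold E, c. rewrite <- !exp_plus. apply exp_le.
      assert (k <= 4) by nra. assert (k * (x t + y t) <= 2) by nra. lra. }
    assert (He2 : exp (-2 * t) = exp (- t) * exp (- t)) by (rewrite <- exp_plus; f_equal; ring).
    assert (He2T : 0 < exp (-2 * T)) by apply exp_pos.
    assert (He2t : 0 < exp (-2 * t)) by apply exp_pos.
    assert (0 <= g * c / 2 * exp (-2 * t)) by (apply Rmult_le_pos; [nra | lra]).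
    assert (HV : VT / 2 <= E / w t ^ 2) by lra.
    assert (HEw : E = E / w t ^ 2 * w t ^ 2) by (field; lra).
    assert (Hw2 : VT / 2 * w t ^ 2 <= c * (exp (- t) * exp (- t))) by nra.
    assert (Hw3 : w t * w t <= (B * exp (- t)) * (B * exp (- t))).
    { replace ((B * exp (- t)) * (B * exp (- t))) with ((B * B) * (exp (- t) * exp (- t))) by ring.
      rewrite HB2. apply Rmult_le_reg_l with (VT / 2); [lra|].
      replace (VT / 2 * (2 * c / VT * (exp (- t) * exp (- t)))) with (c * (exp (- t) * exp (- t))) by (field; lra).
      nra. }
    assert (0 <= B * exp (- t)) by (apply Rmult_le_pos; [lra| left; apply exp_pos]).
    nra. }
  destruct (Hint T HST (B * exp (- T))) as [T' [HT'1 HT'2]].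
  assert (HI : RInt w T T' <= (fun t => - B * exp (- t)) T' - (fun t => - B * exp (- t)) T).
  { apply (int_le w (fun t => - B * exp (- t)) (fun t => B * exp (- t)) T T' HT'1).
    - intros t Ht. auto_derive; [exact I|]. ring.
    - intros t Ht. apply cont_ex. auto_derive. exact I.
    - intros t Ht. apply cont_ex. eexists; apply Dw; apply HtS; lra.
    - intros t Ht. apply Hwb. lra. }
  simpl in HI. assert (0 < exp (- T')) by apply exp_pos. nra.
Qed.
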